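(* Let $G$ be a $4$-edge-connected graph and $u,v$ adjacent vertices of $G$ such that $v$ has at least $3$ edges to $V(G)\setminus\{u,v\}$. Let $va,vb$ be two distinct such edges with $a\ne b$, $a,b\notin\{u,v\}$, and let $G_1=G-u-v+ab$ (delete $u$ and $v$, add a new edge $ab$). If $G_1\in\mathcal{S}_3$, then $G\in\mathcal{S}_3$.
   Context: Graphs may have parallel edges but no loops. $G\in\mathcal{S}_3$ means: for every $\beta:V(G)\to\mathbb{Z}_3$ with $\sum_v\beta(v)\equiv0\pmod3$ there is a strongly-connected orientation $D$ of $G$ with $d^+_D(v)-d^-_D(v)\equiv\beta(v)\pmod3$ for all $v$. *)

(* Defs.v *)
(* Multigraphs: a vertex set W : {set V} and an edge set
   F : {set E} over finite types, with endpoint map ends : E -> V * V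
   (parallel edges allowed: distinct edges may have equal ends). *)
From HB Require Import structures.
From mathcomp Require Import all_boot all_order all_algebra.
Set Implicit Arguments. Unset Strict Implicit. Unset Printing Implicit Defensive.
Import GRing.Theory.

Section Graphs.
Variables (V E : finType).

Definition joins (ends : E -> V * V) (e : E) (x y : V) : bool :=
  (ends e == (x, y)) || (ends e == (y, x)).

Definition tail (ends : E -> V * V) (D : E -> bool) (e : E) : V :=
  if D e then (ends e).1 else (ends e).2.
Definition head (ends : E -> V * V) (D : E -> bool) (e : E) : V :=
  if D e then (ends e).2 else (ends e).1.

Definition darc (F : {set E}) (ends : E -> V * V) (D : E -> bool) : rel V :=
  fun x y => [exists e in F, (tail ends D e == x) && (head ends D e == y)].

Definition strongly_connected (W : {set V}) (F : {set E})
    (ends : E -> V * V) (D : E -> bool) : Prop :=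
  forall x y, x \in W -> y \in W -> connect (darc F ends D) x y.

Definition netdeg3 (F : {set E}) (ends : E -> V * V) (D : E -> bool) (x : V)
    : 'Z_3 :=
  (#|[set e in F | tail ends D e == x]|%:R - #|[set e in F | head ends D e == x]|%:R)%R.

Definition in_S3 (W : {set V}) (F : {set E}) (ends : E -> V * V) : Prop :=
  forall beta : V -> 'Z_3, (\sum_(x in W) beta x = 0)%R ->
    exists D : E -> bool, strongly_connected W F ends D /\
      forall x, x \in W -> netdeg3 F ends D x = beta x.

Definition uarc (F : {set E}) (ends : E -> V * V) : rel V :=
  fun x y => [exists e in F, joins ends e x y].

Definition connected (W : {set V}) (F : {set E}) (ends : E -> V * V) : Prop :=
  forall x y, x \in W -> y \in W -> connect (uarc F ends) x y.

Definition k_edge_connected (k : nat) (W : {set V}) (F : {set E})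
    (ends : E -> V * V) : Prop :=
  forall R : {set E}, R \subset F -> #|R| < k -> connected W (F :\: R) ends.

Definition loopless (F : {set E}) (ends : E -> V * V) : Prop :=
  forall e, e \in F -> (ends e).1 != (ends e).2.

End Graphs.

(* G_1 = G - u - v + ab : vertices V \ {u,v}; edges: Some e for edges e of G
   avoiding u and v, and a new edge None with ends (a, b). *)
Definition del2_vset (V : finType) (u v : V) : {set V} := [set: V] :\: [set u; v].
Definition del2_add_eset (V E : finType) (ends : E -> V * V) (u v : V)
    : {set option E} :=
  [set Some e | e in [set e : E | ((ends e).1 \notin [set u; v]) &&
                                   ((ends e).2 \notin [set u; v])]] :|: [set None].
Definition del2_add_ends (V E : finType) (ends : E -> V * V) (a b : V)
    (o : option E) : V * V :=
  match o with Some e => ends e | None => (a, b) end.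

(* Main.v *)
Require Import Defs.
From HB Require Import structures.
From mathcomp Require Import all_boot all_order all_algebra.
Set Implicit Arguments. Unset Strict Implicit. Unset Printing Implicit Defensive.
Import GRing.Theory.
Local Open Scope ring_scope.

Definition cc (V E : finType) (en : E -> V * V) (D : E -> bool) (e : E) (x : V) : 'Z_3 :=
  ((Defs.tail en D e == x)%:R - (Defs.head en D e == x)%:R)%R.

Lemma card_sumZ (E : finType) (F : {set E}) (P : pred E) :
  (#|[set e in F | P e]|%:R : 'Z_3) = (\sum_(e in F) (P e)%:R)%R.
Proof.
rewrite -sum1_card natr_sum big_mkcond /= [RHS]big_mkcond /=.
apply: eq_bigr => e _; rewrite inE; by case: (e \in F); case: (P e).
Qed.

Lemma netdeg_sum (V E : finType) (F : {set E}) en D (x : V) :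
  netdeg3 F en D x = (\sum_(e in F) cc en D e x)%R.
Proof. by rewrite /netdeg3 !card_sumZ -sumrB. Qed.

Lemma cc_ext (V E : finType) (en : E -> V * V) D D' e x :
  D e = D' e -> cc en D e x = cc en D' e x.
Proof. by rewrite /cc /Defs.tail /Defs.head => ->. Qed.

Lemma sum_eq1 (V : finType) (t : V) : (\sum_x ((t == x)%:R : 'Z_3))%R = 1%R.
Proof.
rewrite (bigD1 t) //= eqxx big1 ?addr0 // => y; rewrite eq_sym => /negbTE -> //.
Qed.

Lemma cc_hand (V E : finType) (en : E -> V * V) D e :
  (\sum_x cc en D e x)%R = 0%R.
Proof. by rewrite /cc sumrB !sum_eq1 subrr. Qed.

Definition orient (V E : finType) (en : E -> V * V) (x : V) (s : bool) (e : E) :=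
  s == ((en e).1 == x).

Definition sg (b : bool) : 'Z_3 := if b then 1%R else (-1)%R.

Lemma joins_sym (V E : finType) (en : E -> V * V) e x y :
  joins en e x y = joins en e y x.
Proof. by rewrite /joins orbC. Qed.

Lemma orient_th (V E : finType) (en : E -> V * V) D e x y s :
  D e = orient en x s e -> joins en e x y -> x != y ->
  Defs.tail en D e = (if s then x else y) /\ Defs.head en D e = (if s then y else x).
Proof.
move=> HD /orP[]/eqP He nxy; rewrite /Defs.tail /Defs.head HD /orient He /= ?eqxx; clear HD.
  by case: s.
have nyx : (y == x) = false by apply/negbTE; rewrite eq_sym.
rewrite nyx; by case: s.
Qed.

Lemma cc_orient (V E : finType) (en : E -> V * V) D e x y s z :
  D e = orient en x s e -> joins en e x y -> x != y ->
  cc en D e z = (if z == x then sg s else if z == y then - sg s else 0)%R.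
Proof.
move=> HD J nxy; have [Ht Hh] := orient_th HD J nxy.
rewrite /cc Ht Hh /sg; clear HD Ht Hh.
have nyx : (y == x) = false by apply/negbTE; rewrite eq_sym.
have nxy' := negbTE nxy.
have [->|nzx] := eqVneq z x.
  by case: s; rewrite eqxx ?nxy' ?nyx /= ?subr0 ?sub0r ?opprK.
have [->|nzy] := eqVneq z y.
  by case: s; rewrite eqxx ?nxy' ?nyx /= ?subr0 ?sub0r ?opprK.
by case: s; rewrite !(eq_sym _ z) (negbTE nzx) (negbTE nzy) subrr.
Qed.

Lemma cut4 (V E : finType) (ends : E -> V * V)
  (H4 : k_edge_connected 4 [set: V] [set: E] ends) (S : {set V}) x y :
  x \in S -> y \notin S ->
  (4 <= #|[set e | ((ends e).1 \in S) != ((ends e).2 \in S)]|)%N.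
Proof.
move=> xS yS; rewrite leqNgt; apply/negP => Hlt.
have := H4 _ (subsetT _) Hlt x y (in_setT _) (in_setT _).
have Hcl : closed (uarc ([set: E] :\: [set e | ((ends e).1 \in S) != ((ends e).2 \in S)]) ends) S.
  move=> p q /existsP[e /andP[]]; rewrite !inE andbT negbK => /eqP Heq /orP[]/eqP He;
  by rewrite He /= in Heq.
by move/(closed_connect Hcl); rewrite xS (negbTE yS).
Qed.

Arguments cc_orient {V E en D e x y s z}.
Arguments orient_th {V E en D e x y s}.

Definition bs := [:: true; false].
Definition zs : seq 'Z_3 := [:: 0; 1; 2].
Lemma zs_all (z : 'Z_3) : z \in zs.
Proof. by case: z => [[|[|[|k]]] Hk]. Qed.
Lemma bs_all (z : bool) : z \in bs.
Proof. by case: z. Qed.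

Definition cond1 τ1 τ2 (α β : 'Z_3) s0 sh t1 t2 s1 :=
  [&& α == sg s0 + (sg sh + (sg t1 + (sg t2 + (0 + 0)))),
      β == - sg s0 + (0 + ((if τ1 then - sg t1 else 0) + ((if τ2 then - sg t2 else 0) + (sg s1 + 0)))),
      [|| s0, sh, t1 | t2] & [|| ~~ s0, ~~ sh, ~~ t1 | ~~ t2]].

Definition fin1 : bool :=
  all (fun τ1 => all (fun τ2 => all (fun α => all (fun β =>
    has (fun s0 => has (fun sh => has (fun t1 => has (fun t2 => has (fun s1 =>
     cond1 τ1 τ2 α β s0 sh t1 t2 s1) bs) bs) bs) bs) bs) zs) zs) bs) bs.
Lemma fin1T : fin1.
Proof. vm_compute. reflexivity. Qed.

Lemma fin1_ex τ1 τ2 (α β : 'Z_3) : exists s0 sh t1 t2 s1, cond1 τ1 τ2 α β s0 sh t1 t2 s1.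
Proof.
have := fin1T; rewrite /fin1.
move=> /allP/(_ τ1 (bs_all _))/allP/(_ τ2 (bs_all _)).
move=> /allP/(_ α (zs_all α))/allP/(_ β (zs_all β)).
move=> /hasP[s0 _] /hasP[sh _] /hasP[t1 _] /hasP[t2 _] /hasP[s1 _] H.
by exists s0, sh, t1, t2, s1.
Qed.

Definition cond2 (α β : 'Z_3) t0 t1 t2 t3 s0 s1 :=
  [&& α == sg t0 + (sg t1 + (sg t2 + (sg t3 + (0 + (0 + 0))))),
      β == - sg t0 + (- sg t1 + (- sg t2 + (- sg t3 + (sg s0 + (sg s1 + 0))))),
      [|| t0, t1, t2 | t3] & [|| ~~ t0, ~~ t1, ~~ t2 | ~~ t3]].

Definition fin2 : bool :=
  all (fun α => all (fun β =>
    has (fun t0 => has (fun t1 => has (fun t2 => has (fun t3 => has (fun s0 => has (fun s1 =>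
     cond2 α β t0 t1 t2 t3 s0 s1) bs) bs) bs) bs) bs) bs) zs) zs.
Lemma fin2T : fin2.
Proof. vm_compute. reflexivity. Qed.

Lemma fin2_ex (α β : 'Z_3) : exists t0 t1 t2 t3 s0 s1, cond2 α β t0 t1 t2 t3 s0 s1.
Proof.
have := fin2T; rewrite /fin2.
move=> /allP/(_ α (zs_all α))/allP/(_ β (zs_all β)).
move=> /hasP[t0 _] /hasP[t1 _] /hasP[t2 _] /hasP[t3 _] /hasP[s0 _] /hasP[s1 _] H.
by exists t0, t1, t2, t3, s0, s1.
Qed.

Lemma pickn (T : finType) (A : {set T}) n : (n <= #|A|)%N ->
  exists s : seq T, [/\ uniq s, size s = n & {subset s <= A}].
Proof.
move=> Hn; exists (take n (enum A)); split.
- exact/take_uniq/enum_uniq.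
- by rewrite size_takel // -cardE.
- by move=> x /mem_take; rewrite mem_enum.
Qed.

Lemma cardD1_ge (T : finType) (A : {set T}) x : (#|A| <= #|A :\ x|.+1)%N.
Proof. by rewrite (cardsD1 x A); case: (x \in A). Qed.

Definition cutset (V E : finType) (ends : E -> V * V) (S : {set V}) :=
  [set e | ((ends e).1 \in S) != ((ends e).2 \in S)].

Lemma cut_S (V E : finType) (ends : E -> V * V) (S : {set V}) e :
  e \in cutset ends S -> exists p q, [/\ joins ends e p q, p \in S & q \notin S].
Proof.
rewrite /cutset inE /joins; case Ee: (ends e) => [p q] /=.
case Hp: (p \in S); case Hq: (q \in S) => //= _.
  by exists p, q; rewrite eqxx Hp Hq.
by exists q, p; rewrite eqxx orbT Hp Hq.
Qed.

Lemma joins_mem (V E : finType) (ends : E -> V * V) e x y p q :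
  joins ends e x y -> joins ends e p q -> (x == p) || (x == q).
Proof.
rewrite /joins; case: (ends e) => p' q'.
by case/orP => /eqP [E1 E2]; case/orP => /eqP [E3 E4]; subst; rewrite eqxx ?orbT.
Qed.

Lemma cc_x (V E : finType) (en : E -> V * V) D e x y s :
  D e = orient en x s e -> joins en e x y -> x != y -> cc en D e x = sg s.
Proof. by move=> H J N; rewrite (cc_orient H J N) eqxx. Qed.
Lemma cc_y (V E : finType) (en : E -> V * V) D e x y s :
  D e = orient en x s e -> joins en e x y -> x != y -> cc en D e y = - sg s.
Proof. by move=> H J N; rewrite (cc_orient H J N) eq_sym (negbTE N) eqxx. Qed.
Lemma cc_z (V E : finType) (en : E -> V * V) D e x y s z :
  D e = orient en x s e -> joins en e x y -> x != y -> z != x ->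
  cc en D e z = if z == y then - sg s else 0.
Proof. by move=> H J N Z; rewrite (cc_orient H J N) (negbTE Z). Qed.
Lemma cc_o (V E : finType) (en : E -> V * V) D e x y s z :
  D e = orient en x s e -> joins en e x y -> x != y -> z != x -> z != y ->
  cc en D e z = 0.
Proof. by move=> H J N Z Z'; rewrite (cc_orient H J N) (negbTE Z) (negbTE Z'). Qed.

Lemma tail_is (V E : finType) (en : E -> V * V) D e x y s :
  D e = orient en x s e -> joins en e x y -> x != y ->
  (Defs.tail en D e == x) = s /\ (Defs.head en D e == x) = ~~ s.
Proof.
move=> H J N; have [-> ->] := orient_th H J N; clear H.
have Nyx : (y == x) = false by apply/negbTE; rewrite eq_sym.
by case: s; rewrite eqxx ?Nyx.
Qed.

Section Core.
Variables (V E : finType) (ends : E -> V * V).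
Hypothesis Hloop : loopless [set: E] ends.
Variables (u v a b : V) (ea eb : E).
Hypothesis H4 : k_edge_connected 4 [set: V] [set: E] ends.
Hypothesis H3 : (3 <= #|[set e : E | [exists w, (w \notin [set u; v]) && joins ends e v w]]|)%N.
Hypotheses (Huv : u != v) (Heab : ea != eb) (Hab : a != b)
  (Ha : a \notin [set u; v]) (Hb : b \notin [set u; v])
  (Hea : joins ends ea v a) (Heb : joins ends eb v b).

Definition inner (e : E) := ((ends e).1 \notin [set u; v]) && ((ends e).2 \notin [set u; v]).
Definition Rp (e : E) := (~~ inner e && (e != ea)) && (e != eb).
Definition netR (DR : E -> bool) (x : V) := \sum_(e | Rp e) cc ends DR e x.

Local Notation W1 := (del2_vset u v).
Local Notation F1 := (del2_add_eset ends u v).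
Local Notation ends1 := (del2_add_ends ends a b).

Lemma ninner_ea : ~~ inner ea.
Proof. rewrite /inner; case/orP: Hea => /eqP -> /=; rewrite !inE eqxx ?orbT ?andbF //. Qed.
Lemma ninner_eb : ~~ inner eb.
Proof. by rewrite /inner; case/orP: Heb => /eqP -> /=; rewrite !inE eqxx ?orbT ?andbF //. Qed.

Lemma anv : a != v. Proof. by move: Ha; rewrite !inE negb_or => /andP[]. Qed.
Lemma bnv : b != v. Proof. by move: Hb; rewrite !inE negb_or => /andP[]. Qed.

Lemma sumW1 (f : V -> 'Z_3) : \sum_x f x = f u + f v + \sum_(x in W1) f x.
Proof.
rewrite (bigD1 u) //= (bigD1 v) /=; last by rewrite eq_sym.
rewrite addrA; congr (_ + _); apply: eq_bigl => x.
by rewrite /del2_vset !inE negb_or andbT.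
Qed.

Lemma net1_dec D1 x : netdeg3 F1 ends1 D1 x =
  \sum_(e | inner e) cc ends1 D1 (Some e) x + cc ends1 D1 None x.
Proof.
rewrite netdeg_sum /del2_add_eset (bigD1 None) /=; last by apply/setUP; right; exact: set11.
rewrite addrC; congr (_ + _).
transitivity (\sum_(o in Some @: [set e | inner e]) cc ends1 D1 o x).
  apply: eq_bigl => -[e|]; rewrite !inE /=.
    by rewrite andbT orbF.
  by rewrite andbF; apply/esym/negP => /imsetP[y _ H].
rewrite (big_imset (fun o => cc ends1 D1 o x)) /=; last by move=> p q _ _ [].
by apply: eq_bigl => e; rewrite inE.
Qed.

Lemma inner_zero D1 e z : inner e -> z \in [set u; v] -> cc ends1 D1 (Some e) z = 0.
Proof.
move=> Hi Hz.
have h1 : ((ends e).1 == z) = false.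
  by apply/negbTE/eqP => E1; move: Hi; rewrite /inner E1 Hz.
have h2 : ((ends e).2 == z) = false.
  by apply/negbTE/eqP => E1; move: Hi; rewrite /inner E1 Hz andbF.
by rewrite /cc /Defs.tail /Defs.head /=; case: (D1 (Some e)); rewrite h1 h2 subrr.
Qed.

Lemma none_zero D1 z : z \in [set u; v] -> cc ends1 D1 None z = 0.
Proof.
move=> Hz.
have h1 : (a == z) = false by apply/negbTE/eqP => E1; move: Ha; rewrite E1 Hz.
have h2 : (b == z) = false by apply/negbTE/eqP => E1; move: Hb; rewrite E1 Hz.
by rewrite /cc /Defs.tail /Defs.head /=; case: (D1 None); rewrite h1 h2 subrr.
Qed.

Definition mkD (D1 : option E -> bool) (DR : E -> bool) (e : E) : bool :=
  if inner e then D1 (Some e) else if e == ea then orient ends a (D1 None) e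
  else if e == eb then orient ends v (D1 None) e else DR e.

Lemma mkD_ea D1 DR : mkD D1 DR ea = orient ends a (D1 None) ea.
Proof. by rewrite /mkD (negbTE ninner_ea) eqxx. Qed.
Lemma mkD_eb D1 DR : mkD D1 DR eb = orient ends v (D1 None) eb.
Proof. by rewrite /mkD (negbTE ninner_eb) eq_sym (negbTE Heab) eqxx. Qed.
Lemma mkD_R D1 DR e : Rp e -> mkD D1 DR e = DR e.
Proof. by rewrite /mkD /Rp => /andP[/andP[/negbTE -> /negbTE ->] /negbTE ->]. Qed.

Lemma eaeb_none D1 DR x :
  cc ends (mkD D1 DR) ea x + cc ends (mkD D1 DR) eb x = cc ends1 D1 None x.
Proof.
rewrite (cc_orient (mkD_ea D1 DR) (etrans (joins_sym _ _ _ _) Hea) anv).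
have bv : v != b by rewrite eq_sym bnv.
rewrite (cc_orient (mkD_eb D1 DR) Heb bv).
have H1 : D1 None = orient ends1 a (D1 None) None by rewrite /orient /= eqxx eqb_id.
have J1 : joins ends1 None a b by rewrite /joins /= eqxx.
rewrite (cc_orient H1 J1 Hab).
have [->|nxa] := eqVneq x a.
  rewrite ifN; last exact: anv.
  by rewrite ifN ?addr0.
have [->|nxv] := eqVneq x v.
  rewrite ifN; last by rewrite eq_sym; exact: bnv.
  by rewrite addNr.
by rewrite add0r.
Qed.

Lemma netG_dec D1 DR x : netdeg3 [set: E] ends (mkD D1 DR) x =
  \sum_(e | inner e) cc ends1 D1 (Some e) x + cc ends1 D1 None x + netR DR x.
Proof.
rewrite netdeg_sum (eq_bigl (fun _ => true)); last by move=> e; rewrite inE.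
rewrite (bigID inner) /= -addrA; congr (_ + _).
  apply: eq_bigr => e Hi; by rewrite /cc /Defs.tail /Defs.head /mkD Hi.
rewrite (bigD1 ea) ?ninner_ea //= (bigD1 eb) /=; last by rewrite ninner_eb eq_sym Heab.
rewrite addrA eaeb_none; congr (_ + _).
apply: eq_bigr => e He; apply: cc_ext; exact: mkD_R.
Qed.

Lemma hand DR : \sum_x netR DR x = 0.
Proof. by rewrite /netR exchange_big /= big1 // => e _; exact: cc_hand. Qed.

Lemma arcE (D : E -> bool) e : darc [set: E] ends D (Defs.tail ends D e) (Defs.head ends D e).
Proof. by apply/existsP; exists e; rewrite in_setT !eqxx. Qed.

Lemma th_neq (D : E -> bool) e : Defs.tail ends D e != Defs.head ends D e.
Proof.
have := Hloop (in_setT e); rewrite /Defs.tail /Defs.head; case: (D e) => //.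
by rewrite eq_sym.
Qed.

Lemma core (HG1 : in_S3 W1 F1 ends1) (beta : V -> 'Z_3)
  (Hbeta : \sum_(x in [set: V]) beta x = 0) (DR : E -> bool) :
  netR DR u = beta u -> netR DR v = beta v ->
  (exists e1, Rp e1 && (Defs.tail ends DR e1 == u)) ->
  (exists e2, Rp e2 && (Defs.head ends DR e2 == u)) ->
  exists D, strongly_connected [set: V] [set: E] ends D /\
    forall x, x \in [set: V] -> netdeg3 [set: E] ends D x = beta x.
Proof.
move=> Hu Hv [e1 He1] [e2 He2].
pose beta1 x := beta x - netR DR x.
have Hs1 : \sum_(x in W1) beta1 x = 0.
  have Hb' : \sum_x beta x = 0.
    by rewrite -[RHS]Hbeta; apply: eq_bigl => x; rewrite inE.
  have := sumW1 beta1; rewrite /beta1 sumrB Hb' hand Hu Hv !subrr !add0r.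
  by move=> <-.
have [D1 [HSC1 Hnet1]] := HG1 beta1 Hs1.
exists (mkD D1 DR); split; last first.
  move=> x _; rewrite netG_dec.
  case Hx: (x \in [set u; v]).
    rewrite big1 ?add0r ?none_zero ?add0r //; last by move=> e Hi; apply: inner_zero.
    by move: Hx; rewrite !inE => /orP[]/eqP ->.
  have HxW : x \in W1 by rewrite /del2_vset in_setD Hx in_setT.
  by rewrite -net1_dec Hnet1 // /beta1 subrK.
set D := mkD D1 DR.
have [Ta Hha] := orient_th (mkD_ea D1 DR) (etrans (joins_sym _ _ _ _) Hea) anv.
have bv : v != b by rewrite eq_sym bnv.
have [Tb Hhb] := orient_th (mkD_eb D1 DR) Heb bv.
have aea := arcE D ea; have aeb := arcE D eb.
rewrite -/D in Ta Hha Tb Hhb.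
rewrite Ta Hha in aea; rewrite Tb Hhb in aeb.
have lift : forall x y, connect (darc F1 ends1 D1) x y -> connect (darc [set: E] ends D) x y.
  apply: connect_sub => x y /existsP[o /andP[Ho /andP[/eqP Ht /eqP Hh]]].
  case: o Ho Ht Hh => [e|] Ho Ht Hh.
    have Hi : inner e.
      move: Ho; rewrite !inE; case/orP => [/imsetP [e' He' [->]]|//].
      by move: He'; rewrite inE.
    apply: connect1; apply/existsP; exists e; rewrite in_setT /=.
    by rewrite -Ht -Hh /Defs.tail /Defs.head /D /mkD Hi /= !eqxx.
  move: Ht Hh; rewrite /Defs.tail /Defs.head /=.
  case: (D1 None) aea aeb => /= aea aeb <- <-.
    exact: connect_trans (connect1 aea) (connect1 aeb).
  exact: connect_trans (connect1 aeb) (connect1 aea).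
have aW : a \in W1 by rewrite /del2_vset in_setD Ha in_setT.
have bW : b \in W1 by rewrite /del2_vset in_setD Hb in_setT.
have hub : forall z, z != u -> connect (darc [set: E] ends D) z a /\
                                connect (darc [set: E] ends D) a z.
  move=> z nzu.
  case Hz: (z \in W1).
    by split; apply: lift; apply: HSC1.
  have -> : z = v.
    by move: Hz; rewrite /del2_vset !inE (negbTE nzu) /= andbT => /negbFE/eqP.
  have lab := lift _ _ (HSC1 a b aW bW); have lba := lift _ _ (HSC1 b a bW aW).
  case: (D1 None) aea aeb => /= aea aeb.
    split; first exact: connect_trans (connect1 aeb) lba.
    exact: connect1 aea.
  split; first exact: connect1 aea.
  exact: connect_trans lab (connect1 aeb).
have hubu : connect (darc [set: E] ends D) u a /\ connect (darc [set: E] ends D) a u.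
  move: He1 He2 => /andP[R1 /eqP T1] /andP[R2 /eqP H2].
  have ED1 : D e1 = DR e1 by rewrite /D mkD_R.
  have ED2 : D e2 = DR e2 by rewrite /D mkD_R.
  have T1' : Defs.tail ends D e1 = u by rewrite /Defs.tail ED1 -T1.
  have H2' : Defs.head ends D e2 = u by rewrite /Defs.head ED2 -H2.
  split.
    have := arcE D e1; rewrite T1' => ar.
    have nu : Defs.head ends D e1 != u by rewrite -T1' eq_sym th_neq.
    exact: connect_trans (connect1 ar) (hub _ nu).1.
  have := arcE D e2; rewrite H2' => ar.
  have nu : Defs.tail ends D e2 != u by rewrite -H2' th_neq.
  exact: connect_trans (hub _ nu).2 (connect1 ar).
have all_hub : forall z, connect (darc [set: E] ends D) z a /\ connect (darc [set: E] ends D) a z.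
  move=> z; have [->|nzu] := eqVneq z u; [exact: hubu | exact: hub].
move=> x y _ _; exact: connect_trans (all_hub x).1 (all_hub y).2.
Qed.


Lemma netR_list DR L x : uniq L -> all Rp L -> (forall e, e \notin L -> DR e = true) ->
  netR DR x = \sum_(e | Rp e && (e \notin L)) cc ends (fun _ => true) e x
              + \sum_(e <- L) cc ends DR e x.
Proof.
move=> UL AL HD; rewrite /netR (bigID (fun e => e \in L)) /= addrC; congr (_ + _).
  by apply: eq_bigr => e /andP[_ He]; apply: cc_ext; exact: HD.
rewrite big_uniq //; apply: eq_bigl => e.
by case He: (e \in L); rewrite ?andbT ?andbF //= (allP AL e He).
Qed.

Lemma Rp_touch e x y : joins ends e x y -> x \in [set u; v] -> e != ea -> e != eb -> Rp e.
Proof.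
move=> J Hx n1 n2; rewrite /Rp n1 n2 !andbT /inner.
by case/orP: J => /eqP -> /=; rewrite Hx ?andbF.
Qed.

Lemma ne_e_gen e f x y p q : joins ends e x y -> joins ends f p q -> x != p -> x != q -> e != f.
Proof.
move=> J Jf n1 n2; apply/eqP => Ef; subst f.
by have := joins_mem J Jf; rewrite (negbTE n1) (negbTE n2).
Qed.

Lemma una : u != a. Proof. by move: Ha; rewrite !inE negb_or eq_sym => /andP[]. Qed.
Lemma unb : u != b. Proof. by move: Hb; rewrite !inE negb_or eq_sym => /andP[]. Qed.

Lemma Rp_u e w : joins ends e u w -> Rp e.
Proof.
move=> J; apply: (Rp_touch J); first by rewrite !inE eqxx.
  exact: ne_e_gen J Hea Huv una.
exact: ne_e_gen J Heb Huv unb.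
Qed.

Lemma notin2 w : w \notin [set u; v] -> (u != w) /\ (v != w).
Proof. by rewrite !inE negb_or => /andP[h1 h2]; split; rewrite eq_sym. Qed.

Lemma case1 (HG1 : in_S3 W1 F1 ends1) beta (Hbeta : \sum_(x in [set: V]) beta x = 0) e0 h wh :
  joins ends e0 u v -> joins ends h u wh -> wh \notin [set u; v] ->
  exists D, strongly_connected [set: V] [set: E] ends D /\
    forall x, x \in [set: V] -> netdeg3 [set: E] ends D x = beta x.
Proof.
move=> J0 Jh Hwh.
have [unwh vnwh] := notin2 Hwh.
have vnu : v != u by rewrite eq_sym.
have Cu : (4 <= #|cutset ends [set u]|)%N.
  have vnuS : v \notin [set u] by rewrite inE.
  exact: (cut4 H4 (set11 u) vnuS).
have A2 : (2 <= #|cutset ends [set u] :\ e0 :\ h|)%N.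
  have h1 := cardD1_ge (cutset ends [set u]) e0.
  have h2 := cardD1_ge (cutset ends [set u] :\ e0) h.
  rewrite -ltnS in h2.
  exact: leq_trans Cu (leq_trans h1 h2).
have [s [Us Ss Hs]] := pickn A2.
case: s Us Ss Hs => [|g1 [|g2 [|? ?]]] //= Us _ Hs.
have [g1h g1e0 g1C] : [/\ g1 != h, g1 != e0 & g1 \in cutset ends [set u]].
  by move: (Hs g1 (mem_head _ _)); rewrite !in_setD1 => /and3P.
have [g2h g2e0 g2C] : [/\ g2 != h, g2 != e0 & g2 \in cutset ends [set u]].
  have g2in : g2 \in [:: g1; g2] by rewrite !inE eqxx orbT.
  by move: (Hs g2 g2in); rewrite !in_setD1 => /and3P.
have g1g2 : g1 != g2 by move: Us; rewrite !inE andbT.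
have Sv1 : (1 <= #|[set e : E | [exists w, (w \notin [set u; v]) && joins ends e v w]] :\ ea :\ eb|)%N.
  have h1 := cardD1_ge [set e : E | [exists w, (w \notin [set u; v]) && joins ends e v w]] ea.
  have h2 := cardD1_ge ([set e : E | [exists w, (w \notin [set u; v]) && joins ends e v w]] :\ ea) eb.
  rewrite -ltnS in h2.
  exact: leq_trans H3 (leq_trans h1 h2).
have [s [_ Ss Hs']] := pickn Sv1.
case: s Ss Hs' => [|f0 [|? ?]] //= _ Hs'.
have [f0eb f0ea f0S] : [/\ f0 != eb, f0 != ea & [exists w, (w \notin [set u; v]) && joins ends f0 v w]].
  by move: (Hs' f0 (mem_head _ _)); rewrite !in_setD1 inE => /and3P.
have [wf /andP[Hwf Jf]] := existsP f0S.
have [unwf vnwf] := notin2 Hwf.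
have [p [w1 [Jg1 pin w1n]]] := cut_S g1C.
move: pin; rewrite inE => /eqP ?; subst p; rewrite inE in w1n.
have [p [w2 [Jg2 pin w2n]]] := cut_S g2C.
move: pin; rewrite inE => /eqP ?; subst p; rewrite inE in w2n.
have unw1 : u != w1 by rewrite eq_sym.
have unw2 : u != w2 by rewrite eq_sym.
have e0h : e0 != h by exact: ne_e_gen (etrans (joins_sym _ _ _ _) J0) Jh vnu vnwh.
have f0e0 : f0 != e0 by rewrite eq_sym; exact: ne_e_gen J0 Jf Huv unwf.
have f0h : f0 != h by rewrite eq_sym; exact: ne_e_gen Jh Jf Huv unwf.
have f0g1 : f0 != g1 by rewrite eq_sym; exact: ne_e_gen Jg1 Jf Huv unwf.
have f0g2 : f0 != g2 by rewrite eq_sym; exact: ne_e_gen Jg2 Jf Huv unwf.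
have Rf : Rp f0 by apply: (Rp_touch Jf) => //; rewrite !inE eqxx orbT.
pose L := [:: e0; h; g1; g2; f0].
pose KR x := \sum_(e | Rp e && (e \notin L)) cc ends (fun _ => true) e x.
have [s0 [sh [t1 [t2 [s1 /and4P[Hal Hbe Hin Hout]]]]]] :=
  fin1_ex (v == w1) (v == w2) (beta u - KR u) (beta v - KR v).
pose DR e := if e == e0 then orient ends u s0 e else if e == h then orient ends u sh e
  else if e == g1 then orient ends u t1 e else if e == g2 then orient ends u t2 e
  else if e == f0 then orient ends v s1 e else true.
have D0 : DR e0 = orient ends u s0 e0 by rewrite /DR eqxx.
have Dh : DR h = orient ends u sh h by rewrite /DR eq_sym (negbTE e0h) eqxx.
have Dg1 : DR g1 = orient ends u t1 g1 by rewrite /DR (negbTE g1e0) (negbTE g1h) eqxx.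
have Dg2 : DR g2 = orient ends u t2 g2.
  by rewrite /DR (negbTE g2e0) (negbTE g2h) eq_sym (negbTE g1g2) eqxx.
have Df : DR f0 = orient ends v s1 f0.
  by rewrite /DR (negbTE f0e0) (negbTE f0h) (negbTE f0g1) (negbTE f0g2) eqxx.
have UL : uniq L.
  rewrite /L /= !inE !negb_or e0h !(eq_sym e0) g1e0 g2e0 f0e0 !(eq_sym h) g1h g2h f0h.
  by rewrite g1g2 !(eq_sym g1) f0g1 !(eq_sym g2) f0g2.
have AL : all Rp L by rewrite /L /= (Rp_u J0) (Rp_u Jh) (Rp_u Jg1) (Rp_u Jg2) Rf.
have HD : forall e, e \notin L -> DR e = true.
  move=> e; rewrite /L !inE !negb_or => /and5P[n0 n1 n2 n3 n4].
  by rewrite /DR (negbTE n0) (negbTE n1) (negbTE n2) (negbTE n3) (negbTE n4).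
apply: (core HG1 Hbeta (DR := DR)).
- rewrite (netR_list u UL AL HD) /L !big_cons big_nil.
  rewrite (cc_x D0 J0 Huv) (cc_x Dh Jh unwh) (cc_x Dg1 Jg1 unw1) (cc_x Dg2 Jg2 unw2).
  rewrite (cc_o Df Jf vnwf Huv unwf) -(eqP Hal) addrC subrK //.
- rewrite (netR_list v UL AL HD) /L !big_cons big_nil.
  rewrite (cc_y D0 J0 Huv) (cc_o Dh Jh unwh vnu vnwh) (cc_z Dg1 Jg1 unw1 vnu).
  rewrite (cc_z Dg2 Jg2 unw2 vnu) (cc_x Df Jf vnwf) -(eqP Hbe) addrC subrK //.
- case/or4P: Hin => Hs1.
  + by exists e0; rewrite (Rp_u J0) (tail_is D0 J0 Huv).1.
  + by exists h; rewrite (Rp_u Jh) (tail_is Dh Jh unwh).1.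
  + by exists g1; rewrite (Rp_u Jg1) (tail_is Dg1 Jg1 unw1).1.
  + by exists g2; rewrite (Rp_u Jg2) (tail_is Dg2 Jg2 unw2).1.
- case/or4P: Hout => Hs1.
  + by exists e0; rewrite (Rp_u J0) (tail_is D0 J0 Huv).2.
  + by exists h; rewrite (Rp_u Jh) (tail_is Dh Jh unwh).2.
  + by exists g1; rewrite (Rp_u Jg1) (tail_is Dg1 Jg1 unw1).2.
  + by exists g2; rewrite (Rp_u Jg2) (tail_is Dg2 Jg2 unw2).2.
Qed.

Lemma case2 (HG1 : in_S3 W1 F1 ends1) beta (Hbeta : \sum_(x in [set: V]) beta x = 0)
  (Hno : forall h w, w \notin [set u; v] -> ~~ joins ends h u w) :
  exists D, strongly_connected [set: V] [set: E] ends D /\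
    forall x, x \in [set: V] -> netdeg3 [set: E] ends D x = beta x.
Proof.
have vnu : v != u by rewrite eq_sym.
have Cu : (4 <= #|cutset ends [set u]|)%N.
  have vnuS : v \notin [set u] by rewrite inE.
  exact: (cut4 H4 (set11 u) vnuS).
have uS : u \in [set u; v] by rewrite !inE eqxx.
have Cuv : (4 <= #|cutset ends [set u; v]|)%N := cut4 H4 uS Ha.
have A2 : (2 <= #|cutset ends [set u; v] :\ ea :\ eb|)%N.
  have h1 := cardD1_ge (cutset ends [set u; v]) ea.
  have h2 := cardD1_ge (cutset ends [set u; v] :\ ea) eb.
  rewrite -ltnS in h2.
  exact: leq_trans Cuv (leq_trans h1 h2).
have gv : forall g, g \in cutset ends [set u] -> joins ends g u v.
  move=> g /cut_S [p [w [J pin wn]]]; move: pin; rewrite inE => /eqP ?; subst p.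
  rewrite inE in wn.
  have : w \in [set u; v] by apply: contraT => Hw; have := Hno g w Hw; rewrite J.
  by rewrite !inE (negbTE wn) /= => /eqP <-.
have fv : forall f, f \in cutset ends [set u; v] -> exists w, joins ends f v w && (w \notin [set u; v]).
  move=> f /cut_S [p [w [J pin wn]]]; exists w; rewrite wn andbT.
  move: pin; rewrite !inE => /orP[]/eqP ?; subst p; last done.
  by have := Hno f w wn; rewrite J.
have [s [Us Ss Hs]] := pickn Cu.
case: s Us Ss Hs => [|g0 [|g1 [|g2 [|g3 [|? ?]]]]] //= Us _ Hs.
have Jg0 : joins ends g0 u v by apply: gv; apply: Hs; rewrite !inE eqxx ?orbT.
have Jg1 : joins ends g1 u v by apply: gv; apply: Hs; rewrite !inE eqxx ?orbT.
have Jg2 : joins ends g2 u v by apply: gv; apply: Hs; rewrite !inE eqxx ?orbT.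
have Jg3 : joins ends g3 u v by apply: gv; apply: Hs; rewrite !inE eqxx ?orbT.
move: Us; rewrite !inE !negb_or => /and4P[/and3P[g0g1 g0g2 g0g3] /andP[g1g2 g1g3] g2g3 _].
have [s [Us Ss Hs']] := pickn A2.
case: s Us Ss Hs' => [|f0 [|f1 [|? ?]]] //= Us _ Hs'.
have f0f1 : f0 != f1 by move: Us; rewrite !inE andbT.
have [f0eb f0ea f0C] : [/\ f0 != eb, f0 != ea & f0 \in cutset ends [set u; v]].
  by move: (Hs' f0 (mem_head _ _)); rewrite !in_setD1 => /and3P.
have [f1eb f1ea f1C] : [/\ f1 != eb, f1 != ea & f1 \in cutset ends [set u; v]].
  have f1in : f1 \in [:: f0; f1] by rewrite !inE eqxx orbT.
  by move: (Hs' f1 f1in); rewrite !in_setD1 => /and3P.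
have [w0 /andP[Jf0 Hw0]] := fv f0 f0C.
have [w1 /andP[Jf1 Hw1]] := fv f1 f1C.
have [unw0 vnw0] := notin2 Hw0.
have [unw1 vnw1] := notin2 Hw1.
have g0f0 : g0 != f0 by exact: ne_e_gen Jg0 Jf0 Huv unw0.
have g0f1 : g0 != f1 by exact: ne_e_gen Jg0 Jf1 Huv unw1.
have g1f0 : g1 != f0 by exact: ne_e_gen Jg1 Jf0 Huv unw0.
have g1f1 : g1 != f1 by exact: ne_e_gen Jg1 Jf1 Huv unw1.
have g2f0 : g2 != f0 by exact: ne_e_gen Jg2 Jf0 Huv unw0.
have g2f1 : g2 != f1 by exact: ne_e_gen Jg2 Jf1 Huv unw1.
have g3f0 : g3 != f0 by exact: ne_e_gen Jg3 Jf0 Huv unw0.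
have g3f1 : g3 != f1 by exact: ne_e_gen Jg3 Jf1 Huv unw1.
have Rf0 : Rp f0 by apply: (Rp_touch Jf0) => //; rewrite !inE eqxx orbT.
have Rf1 : Rp f1 by apply: (Rp_touch Jf1) => //; rewrite !inE eqxx orbT.
have ng1g0 : (g1 == g0) = false by rewrite eq_sym; exact: negbTE g0g1.
have ng2g0 : (g2 == g0) = false by rewrite eq_sym; exact: negbTE g0g2.
have ng3g0 : (g3 == g0) = false by rewrite eq_sym; exact: negbTE g0g3.
have nf0g0 : (f0 == g0) = false by rewrite eq_sym; exact: negbTE g0f0.
have nf1g0 : (f1 == g0) = false by rewrite eq_sym; exact: negbTE g0f1.
have ng2g1 : (g2 == g1) = false by rewrite eq_sym; exact: negbTE g1g2.
have ng3g1 : (g3 == g1) = false by rewrite eq_sym; exact: negbTE g1g3.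
have nf0g1 : (f0 == g1) = false by rewrite eq_sym; exact: negbTE g1f0.
have nf1g1 : (f1 == g1) = false by rewrite eq_sym; exact: negbTE g1f1.
have ng3g2 : (g3 == g2) = false by rewrite eq_sym; exact: negbTE g2g3.
have nf0g2 : (f0 == g2) = false by rewrite eq_sym; exact: negbTE g2f0.
have nf1g2 : (f1 == g2) = false by rewrite eq_sym; exact: negbTE g2f1.
have nf0g3 : (f0 == g3) = false by rewrite eq_sym; exact: negbTE g3f0.
have nf1g3 : (f1 == g3) = false by rewrite eq_sym; exact: negbTE g3f1.
have nf1f0 : (f1 == f0) = false by rewrite eq_sym; exact: negbTE f0f1.
pose L := [:: g0; g1; g2; g3; f0; f1].
pose KR x := \sum_(e | Rp e && (e \notin L)) cc ends (fun _ => true) e x.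
have [t0 [t1 [t2 [t3 [s0 [s1 /and4P[Hal Hbe Hin Hout]]]]]]] :=
  fin2_ex (beta u - KR u) (beta v - KR v).
pose DR e := if e == g0 then orient ends u t0 e else if e == g1 then orient ends u t1 e else if e == g2 then orient ends u t2 e else if e == g3 then orient ends u t3 e else if e == f0 then orient ends v s0 e else if e == f1 then orient ends v s1 e else true.
have Dg0 : DR g0 = orient ends u t0 g0 by rewrite /DR  eqxx.
have Dg1 : DR g1 = orient ends u t1 g1 by rewrite /DR ng1g0 eqxx.
have Dg2 : DR g2 = orient ends u t2 g2 by rewrite /DR ng2g0 ng2g1 eqxx.
have Dg3 : DR g3 = orient ends u t3 g3 by rewrite /DR ng3g0 ng3g1 ng3g2 eqxx.
have Df0 : DR f0 = orient ends v s0 f0 by rewrite /DR nf0g0 nf0g1 nf0g2 nf0g3 eqxx.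
have Df1 : DR f1 = orient ends v s1 f1 by rewrite /DR nf1g0 nf1g1 nf1g2 nf1g3 nf1f0 eqxx.
have UL : uniq L by rewrite /L /= !inE !negb_or g0g1 g0g2 g0g3 g0f0 g0f1 g1g2 g1g3 g1f0 g1f1 g2g3 g2f0 g2f1 g3f0 g3f1 f0f1.
have AL : all Rp L by rewrite /L /= (Rp_u Jg0) (Rp_u Jg1) (Rp_u Jg2) (Rp_u Jg3) Rf0 Rf1.
have HD : forall e, e \notin L -> DR e = true.
  move=> e He; rewrite /DR.
  have F : forall g, g \in L -> (e == g) = false.
    by move=> g Hg; apply/negbTE/eqP => ?; subst; rewrite Hg in He.
  by rewrite !F // /L !inE eqxx ?orbT.
apply: (core HG1 Hbeta (DR := DR)).
- rewrite (netR_list u UL AL HD) /L !big_cons big_nil.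
  rewrite (cc_x Dg0 Jg0 Huv) (cc_x Dg1 Jg1 Huv) (cc_x Dg2 Jg2 Huv) (cc_x Dg3 Jg3 Huv).
  rewrite (cc_o Df0 Jf0 vnw0 Huv unw0) (cc_o Df1 Jf1 vnw1 Huv unw1) -(eqP Hal) addrC subrK //.
- rewrite (netR_list v UL AL HD) /L !big_cons big_nil.
  rewrite (cc_y Dg0 Jg0 Huv) (cc_y Dg1 Jg1 Huv) (cc_y Dg2 Jg2 Huv) (cc_y Dg3 Jg3 Huv).
  rewrite (cc_x Df0 Jf0 vnw0) (cc_x Df1 Jf1 vnw1) -(eqP Hbe) addrC subrK //.
- case/or4P: Hin => Hs1.
  + by exists g0; rewrite (Rp_u Jg0) (tail_is Dg0 Jg0 Huv).1.
  + by exists g1; rewrite (Rp_u Jg1) (tail_is Dg1 Jg1 Huv).1.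
  + by exists g2; rewrite (Rp_u Jg2) (tail_is Dg2 Jg2 Huv).1.
  + by exists g3; rewrite (Rp_u Jg3) (tail_is Dg3 Jg3 Huv).1.
- case/or4P: Hout => Hs1.
  + by exists g0; rewrite (Rp_u Jg0) (tail_is Dg0 Jg0 Huv).2.
  + by exists g1; rewrite (Rp_u Jg1) (tail_is Dg1 Jg1 Huv).2.
  + by exists g2; rewrite (Rp_u Jg2) (tail_is Dg2 Jg2 Huv).2.
  + by exists g3; rewrite (Rp_u Jg3) (tail_is Dg3 Jg3 Huv).2.
Qed.
End Core.

Local Close Scope ring_scope.
Unset Implicit Arguments.
Set Strict Implicit.
Set Printing Implicit Defensive.

Theorem mainTheorem10 (V E : finType) (ends : E -> V * V)
  (Hloop : loopless [set: E] ends)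
  (H4 : k_edge_connected 4 [set: V] [set: E] ends)
  (u v : V) (Huv : u != v) (Hadj : exists e : E, joins ends e u v)
  (H3 : 3 <= #|[set e : E | [exists w, (w \notin [set u; v]) && joins ends e v w]]|)
  (ea eb : E) (a b : V) (Heab : ea != eb) (Hab : a != b)
  (Ha : a \notin [set u; v]) (Hb : b \notin [set u; v])
  (Hea : joins ends ea v a) (Heb : joins ends eb v b) :
  in_S3 (del2_vset u v) (del2_add_eset ends u v) (del2_add_ends ends a b) ->
  in_S3 [set: V] [set: E] ends.
Proof.
move=> HG1 beta Hbeta.
case: (boolP [exists h, [exists w, (w \notin [set u; v]) && joins ends h u w]]).
  move=> /existsP[h /existsP[wh /andP[Hw Jh]]].
  case: Hadj => e0 J0.
  exact: (case1 Hloop H4 H3 Huv Heab Hab Ha Hb Hea Heb HG1 Hbeta J0 Jh Hw).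
move=> Hno.
apply: (case2 Hloop H4 Huv Heab Hab Ha Hb Hea Heb HG1 Hbeta).
move=> h w Hw; apply/negP => J; move: Hno; rewrite negb_exists => /forallP/(_ h).
by rewrite negb_exists => /forallP/(_ w); rewrite Hw J.
Qed.
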